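(* Let $(\mathbf{X},\mathcal{F},\mu)$ be a probability space with a reflexive symmetric relation $\approx$ such that $D(x)=\{y:y\approx x\}\in\mathcal{F}$ for all $x$ and $\inf_{x\in\mathbf{X}}\mu(D(x))>0$. Let $\Omega=\{\Omega_1,\dots,\Omega_m\}$ be a partition of $\mathbf{X}$ into measurable sets with $\mu(\Omega_i)>0$ such that $x\approx y$ implies $x,y$ lie in the same $\Omega_i$; for $x\in\mathbf{X}$ let $i(x)$ be the index with $x\in\Omega_{i(x)}$, and set $\bar k(\Omega)=\sup_{x\in\mathbf{X}}\mu(\Omega_{i(x)})/\mu(D(x))$. Let $R=\{R_1,\dots,R_m\}$ be a measurable partition of $\mathbf{X}$ with label function $\ell(x)=c$ iff $x\in R_c$, and recall rates $\rho_i=\mu(R_i\cap\Omega_i)/\mu(\Omega_i)$. If $\rho_i\geq\underline\rho$ for all $i$, where $(1-\underline\rho)\,\bar k(\Omega)<1$, then every misclassified input $x$ (i.e. $\ell(x)\neq i(x)$) satisfies $\mu(D(x)\setminus R_{\ell(x)})>0$; in particular there exists $y\approx x$ with $\ell(y)\neq\ell(x)$.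
   Context: A classifier has hyper-sensitive behavior if every misclassified input is an adversarial Doppelgänger, i.e. has some $y\approx x$ with a different label. *)

(* Defs.v *)
From HB Require Import structures.
From mathcomp Require Import all_boot all_order all_algebra.
From mathcomp Require Import all_classical all_reals all_analysis.
Set Implicit Arguments. Unset Strict Implicit. Unset Printing Implicit Defensive.
Import Order.TTheory GRing.Theory Num.Theory.
Local Open Scope classical_set_scope.
Local Open Scope ring_scope.

Definition dop (T : Type) (approx : T -> T -> Prop) (x : T) : set T :=
  [set y | approx y x].

Definition cell (T : Type) (m : nat) (f : T -> 'I_m) (i : 'I_m) : set T :=
  f @^-1` [set i].

Definition recall_rate d (T : measurableType d) (R : realType)
  (mu : probability T R) (m : nat) (iof ell : T -> 'I_m) (i : 'I_m) : R :=
  fine (mu (cell ell i `&` cell iof i)) / fine (mu (cell iof i)).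

Definition kbar d (T : measurableType d) (R : realType)
  (mu : probability T R) (approx : T -> T -> Prop) (m : nat) (iof : T -> 'I_m)
  : \bar R :=
  ereal_sup [set ((fine (mu (cell iof (iof x))) / fine (mu (dop approx x)))%:E)%E
            | x in [set: T]].

(* Main.v *)
Require Import Defs.
From HB Require Import structures.
From mathcomp Require Import all_boot all_order all_algebra.
From mathcomp Require Import all_classical all_reals all_analysis.
From mathcomp Require Import lra.
Import Order.TTheory GRing.Theory Num.Theory.
Local Open Scope classical_set_scope.
Local Open Scope ring_scope.

Lemma muE d (T : measurableType d) (R : realType) (mu : probability T R) (A : set T) :
  measurable A -> mu A = (fine (mu A))%:E.
Proof.
move=> hA; rewrite fineK // ge0_fin_numE ?measure_ge0 //.
by apply: le_lt_trans (probability_le1 _ hA) _; rewrite ltry.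
Qed.

Lemma fine_ge0' d (T : measurableType d) (R : realType) (mu : probability T R) (A : set T) :
  0 <= fine (mu A).
Proof. by apply: fine_ge0; exact: measure_ge0. Qed.

Theorem mainTheorem14 (d : measure_display) (T : measurableType d) (R : realType)
  (mu : probability T R) (approx : T -> T -> Prop)
  (approx_refl : forall x, approx x x)
  (approx_sym : forall x y, approx x y -> approx y x)
  (D_meas : forall x, measurable (dop approx x))
  (D_inf : (0 < ereal_inf [set mu (dop approx x) | x in [set: T]])%E)
  (m : nat) (iof : T -> 'I_m)
  (Omega_meas : forall i, measurable (cell iof i))
  (Omega_pos : forall i, (0 < mu (cell iof i))%E)
  (approx_cell : forall x y, approx x y -> iof x = iof y)
  (ell : T -> 'I_m)
  (R_meas : forall c, measurable (cell ell c))
  (rho_low : R)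
  (rho_ge : forall i, rho_low <= recall_rate mu iof ell i)
  (cond : ((1 - rho_low)%:E * kbar mu approx iof < 1)%E) :
  forall x, ell x <> iof x ->
    (0 < mu (dop approx x `\` cell ell (ell x)))%E /\
    (exists y, approx y x /\ ell y <> ell x).
Proof.
move=> x hx.
set i := iof x; set c := ell x.
set D := dop approx x.
set Om := cell iof i; set Ri := cell ell i.
have mD : measurable D by exact: D_meas.
have mOm : measurable Om by exact: Omega_meas.
have mRi : measurable Ri by exact: R_meas.
have DOm : D `<=` Om by move=> y /approx_cell.
have key : (0 < mu (D `&` Ri))%E.
  set a := fine (mu Om).
  set p := fine (mu (Ri `&` Om)).
  set q := fine (mu (Om `\` Ri)).
  set b := fine (mu D).
  set e := fine (mu (D `&` Ri)).
  have a0 : 0 < a.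
    by rewrite -lte_fin -muE //; apply: Omega_pos.
  have b0 : 0 < b.
    rewrite -lte_fin -muE //; apply: lt_le_trans D_inf _.
    by apply: ereal_inf_lbound; exists x.
  have mRO : measurable (Ri `&` Om) by exact: measurableI.
  have mOR : measurable (Om `\` Ri) by exact: measurableD.
  have mDR : measurable (D `&` Ri) by exact: measurableI.
  have hpq : p + q = a.
    apply: EFin_inj; rewrite EFinD /p /q /a -!muE //.
    rewrite -measureU //.
      by congr (mu _); rewrite setDE setIC -setIUr setUCr setIT.
    by apply/seteqP; split => // y [[Ry _] [_ nRy]].
  have q0 : 0 <= q by exact: fine_ge0'.
  have p0 : 0 <= p by exact: fine_ge0'.
  have hrho : rho_low <= p / a by exact: rho_ge.
  have hpa : p / a <= 1 by rewrite ler_pdivrMr // mul1r; lra.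
  have hq : q <= (1 - rho_low) * a.
    have : rho_low * a <= p by rewrite -ler_pdivlMr.
    lra.
  have hk : ((a / b)%:E <= kbar mu approx iof)%E.
    by apply: ereal_sup_ubound; exists x.
  have hr : (1 - rho_low) * (a / b) < 1.
    rewrite -lte_fin EFinM; apply: le_lt_trans cond.
    by apply: lee_wpmul2l => //; rewrite lee_fin; lra.
  have hta : (1 - rho_low) * a < b.
    have ar : a = a / b * b by rewrite divfK // gt_eqF.
    set r := a / b in ar hr; rewrite ar.
    have : (1 - rho_low) * r * b < 1 * b by rewrite ltr_pM2r.
    lra.
  have hb : b <= e + q.
    rewrite -lee_fin /b /e /q EFinD -!muE //.
    apply: le_trans (measureU2 _ mDR mOR).
    apply: le_measure; rewrite ?inE //; first exact: measurableU.
    move=> y Dy; have [Ry|nRy] := pselect (Ri y).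
      by left.
    by right; split => //; apply: DOm.
  have hqb : q < b by exact: le_lt_trans hq hta.
  rewrite (@muE _ _ _ mu _ mDR) -/e lte_fin; lra.
split.
  apply: lt_le_trans key _; apply: le_measure; rewrite ?inE.
  - exact: measurableI.
  - exact: measurableD.
  move=> y [Dy Riy]; split => //.
  by rewrite /cell /= => hyc; apply: hx; rewrite -/c -hyc Riy.
have : D `&` Ri !=set0.
  apply/set0P/eqP => h; move: key; by rewrite h measure0 ltxx.
case=> y [Dy Riy]; exists y; split => //.
by move=> hyc; apply: hx; rewrite -/c -hyc Riy.
Qed.
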